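(* For $n\ge 1$ let $a(n) = n - \lfloor \sqrt{n-1} \rfloor$. Then for every $n\ge 1$, $$\sum_{i=1}^n a(i) = \big|\{(x,y)\in \mathbb{Z}_{>0}\times\mathbb{Z}_{>0} : y \le x \le y^2 \text{ and } x\le n\}\big|.$$
   Context: $\mathbb{Z}_{>0}$ denotes the set of positive integers. (This $a(n)$ is the case $m=2$ of the sequence $n-h(n)$ where each $k\ge0$ appears $2k+1$ times in $h$, $h(1)=0$.) *)

(* Defs.v *)
From mathcomp Require Import all_boot.
From Stdlib Require Import PeanoNat.

Definition a (n : nat) : nat := n - Nat.sqrt (n - 1).

(* The set {(x,y) in Z>0 x Z>0 : y <= x <= y^2, x <= n}, encoded inside
   'I_n.+1 * 'I_n.+1 (all such x,y satisfy y <= x <= n). *)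
Definition pairset (n : nat) : {set 'I_n.+1 * 'I_n.+1} :=
  [set p : 'I_n.+1 * 'I_n.+1 |
     [&& 0 < p.1, 0 < p.2, p.2 <= p.1, p.1 <= p.2 ^ 2 & p.1 <= n]].

(* Main.v *)
Require Import Defs.
From mathcomp Require Import all_boot.
From Stdlib Require Import PeanoNat Lia.
From mathcomp Require Import zify.

Lemma key (x y : nat) : 0 < x -> (x <= y ^ 2) = ((Nat.sqrt (x - 1)).+1 <= y).
Proof.
move=> Hx; have H := Nat.sqrt_lt_square (x - 1) y.
have e : y ^ 2 = y * y by rewrite /= Nat.mul_1_r.
rewrite e.
apply/idP/idP => [h|h].
- have : (Nat.sqrt (x - 1) < y)%coq_nat by apply/H; lia.
  move=> h2; apply/ltP; exact h2.
- have h2 : (Nat.sqrt (x - 1) < y)%coq_nat by apply/ltP.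
  move/H: h2 => h3. lia.
Qed.

Lemma inner (n x : nat) : 0 < x -> x <= n ->
  \sum_(y < n.+1) [&& 0 < x, 0 < y, y <= x, x <= y ^ 2 & x <= n] = a x.
Proof.
move=> Hx Hxn.
set s := (Nat.sqrt (x - 1)).+1.
have Hs1 : 0 < s by [].
have Hsx : s <= x.+1.
  rewrite /s; have := Nat.sqrt_le_lin (x - 1); lia.
set F := fun y => nat_of_bool [&& 0 < x, 0 < y, y <= x, x <= y ^ 2 & x <= n].
rewrite -(big_mkord xpredT F).
rewrite (big_cat_nat _ (n := x.+1)) //.
have -> : \sum_(x.+1 <= i < n.+1) F i = 0.
  rewrite big_nat_cond big1 // => i /ssrbool.andP[/ssrbool.andP[Hi _] _].
  rewrite /F; have -> : (i <= x) = false by lia.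
  by rewrite !andbF.
rewrite /= addn0 (big_cat_nat _ (n := s)) //.
have -> : \sum_(0 <= i < s) F i = 0.
  rewrite big_nat_cond big1 // => i /ssrbool.andP[/ssrbool.andP[_ Hi] _].
  rewrite /F (key x i Hx) -/s; have -> : (s <= i) = false by lia.
  by rewrite !andbF.
rewrite /= add0n (eq_big_nat _ _ (F2 := fun _ => 1)); last first.
  move=> i /ssrbool.andP[Hi1 Hi2]; rewrite /F (key x i Hx) -/s Hi1 Hx Hxn.
  have -> : 0 < i by apply: leq_trans Hi1.
  by rewrite -ltnS Hi2.
rewrite sum_nat_const_nat muln1 /a /s. lia.
Qed.

Theorem mainTheorem4 (n : nat) : 1 <= n ->
  \sum_(1 <= i < n.+1) a i = #|pairset n|.
Proof.
move=> _.
have -> : #|pairset n| = \sum_(i < n.+1) \sum_(j < n.+1) (if (i, j) \in pairset n then 1 else 0).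
  rewrite pair_big /= -sum1_card big_mkcond /=.
  by apply: eq_bigr => -[i j].
rewrite [RHS]big_ord_recl.
have -> : \sum_(j < n.+1) (if ((ord0 : 'I_n.+1), j) \in pairset n then 1 else 0) = 0.
  by rewrite big1 // => j _; rewrite inE.
rewrite add0n.
rewrite big_add1 /= big_mkord; apply: eq_bigr => i _.
rewrite -(@inner n i.+1) //.
apply: eq_bigr => j _; rewrite inE /= /bump /=.
by case: (_ && _).
Qed.
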